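(* Let $m\geq 1$, let $\Lambda_m,\Delta_m\subseteq\mathbb{R}^{2^m}$ and $\Lambda_{m+1}\subseteq\mathbb{R}^{2^{m+1}}$ be the lattices defined below, and let $\iota,\tau:\mathbb{Z}^{2^m}\to\mathbb{Z}^{2^{m+1}}$ be the maps defined below. Then $\Lambda_{m+1}=\{\iota(\ell)+\iota(d)+\tau(\ell)\mid \ell\in\Lambda_m,\ d\in\Delta_m\}$.
   Context: For $n\ge 1$ let $\mathcal{V}_n=\mathbb{F}_2^n$ and let $(e_v\mid v\in\mathcal{V}_n)$ be an orthonormal basis of $\mathbb{R}^{2^n}$ indexed by $\mathcal{V}_n$; let $\Gamma_n=\langle e_v\mid v\in\mathcal{V}_n\rangle_{\mathbb{Z}}$. For $\mathcal{U}\subseteq\mathcal{V}_n$ put $x_{\mathcal{U}}=\sum_{v\in\mathcal{U}}e_v$. Define $\Lambda_n=\langle 2^{\lfloor (n-r)/2\rfloor}x_{\mathcal{U}} \mid 0\le r\le n,\ \mathcal{U}\text{ an affine subspace of }\mathcal{V}_n,\ \dim\mathcal{U}=r\rangle_{\mathbb{Z}}$ and $\Delta_n=\langle 2^{\lfloor (n-r+1)/2\rfloor}x_{\mathcal{U}} \mid 0\le r\le n,\ \mathcal{U}\text{ an affine subspace of }\mathcal{V}_n,\ \dim\mathcal{U}=r\rangle_{\mathbb{Z}}$. Fix a basis $(v_1,\dots,v_{m+1})$ of $\mathcal{V}_{m+1}$ and identify $\mathcal{V}_m$ with $\langle v_1,\dots,v_m\rangle$ via the embedding $\iota:\mathcal{V}_m\hookrightarrow\mathcal{V}_{m+1}$;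 let $\tau:\mathcal{V}_m\to\mathcal{V}_{m+1}$, $v\mapsto v_{m+1}+\iota(v)$, so $\mathcal{V}_{m+1}=\iota(\mathcal{V}_m)\,\dot\cup\,\tau(\mathcal{V}_m)$. Also denote by $\iota,\tau:\Gamma_m\to\Gamma_{m+1}$ the $\mathbb{Z}$-linear maps with $\iota(e_v)=e_{\iota(v)}$ and $\tau(e_v)=e_{\tau(v)}$ for $v\in\mathcal{V}_m$ (isometric embeddings with $\Gamma_{m+1}=\iota(\Gamma_m)\perp\tau(\Gamma_m)$). *)

(* Defs.v *)
From HB Require Import structures.
From mathcomp Require Import all_boot all_order all_algebra.
Set Implicit Arguments. Unset Strict Implicit. Unset Printing Implicit Defensive.
Import Order.TTheory GRing.Theory Num.Theory.
Local Open Scope ring_scope.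

Definition V (n : nat) := 'rV['F_2]_n.

Definition Gam (n : nat) := {ffun V n -> int}.

Definition is_affine (n : nat) (A : {set V n}) (r : nat) : bool :=
  [exists a : V n, exists M : 'M['F_2]_n,
     (\rank M == r) && (A == [set v : V n | (v - a <= M)%MS])].

Definition gen (n : nat) (A : {set V n}) (k : nat) : Gam n :=
  [ffun v => if v \in A then (2 ^ k)%:Z else 0].

Definition in_lattice (e : nat -> nat -> nat) (n : nat) (x : Gam n) : Prop :=
  exists c : {ffun {set V n} * 'I_n.+1 -> int},
    x = \sum_(p : {set V n} * 'I_n.+1 | is_affine p.1 p.2)
          gen p.1 (e n p.2) *~ c p.

Definition Lambda (n : nat) (x : Gam n) : Prop :=
  in_lattice (fun n r => (n - r)./2) x.
Definition Delta (n : nat) (x : Gam n) : Prop :=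
  in_lattice (fun n r => (n - r).+1./2) x.

(* embeddings V_m -> V_{m+1} for the basis given by the rows of B:
   iota(v) = sum_i v_i b_i,  tau(v) = b_{m+1} + iota(v) *)
Definition iotaV (m : nat) (B : 'M['F_2]_(m + 1)) (v : V m) : V (m + 1) :=
  row_mx v (0 : 'rV['F_2]_1) *m B.
Definition tauV (m : nat) (B : 'M['F_2]_(m + 1)) (v : V m) : V (m + 1) :=
  row_mx v (const_mx 1 : 'rV['F_2]_1) *m B.

(* induced Z-linear map Gamma_m -> Gamma_{m+1}, e_v |-> e_{f v} *)
Definition push (m : nat) (f : V m -> V (m + 1)) (x : Gam m) : Gam (m + 1) :=
  [ffun w => \sum_(v : V m | f v == w) x v].

(* Main.v *)
Require Import Defs.
From mathcomp Require Import all_boot all_order all_algebra zify.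
Import GRing.Theory.
Local Open Scope ring_scope.
Set Implicit Arguments. Unset Strict Implicit. Unset Printing Implicit Defensive.
Lemma F2_cases (c : 'F_2) : c = 0 \/ c = 1.
Proof. case: c => [[|[|k]]] Hk; [left|right|by []]; exact/val_inj. Qed.
Lemma F2_all (P : 'F_2 -> Prop) : P 0 -> P 1 -> forall c, P c.
Proof. by move=> h0 h1 c; case: (F2_cases c) => ->. Qed.

Ltac f2all := repeat (match goal with |- forall _ : _, _ => apply: F2_all end).

Definition aff3 n (A : {set V n}) :=
  forall x y z, x \in A -> y \in A -> z \in A -> x + y + z \in A.

Lemma card_rowspace n (M : 'M['F_2]_n) :
  #|[set u : V n | (u <= M)%MS]| = (2 ^ \rank M)%N.
Proof.
have -> : [set u : V n | (u <= M)%MS] =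
          [set (D *m row_base M) | D : 'rV['F_2]_(\rank M)].
  apply/setP => u; rewrite inE; apply/idP/imsetP.
  - rewrite -{1}(eq_row_base M) => /submxP [D ->]; by exists D.
  - by move=> [D _ ->]; rewrite -(eq_row_base M) submxMl.
rewrite card_imset; last exact/row_free_inj/row_base_free.
by rewrite card_mx card_Fp // mul1n.
Qed.

Lemma V_sub_add n (x a : V n) : x - a = x + a.
Proof. apply/rowP => i; rewrite !mxE; move: (x 0 i) (a 0 i).
f2all; by apply/eqP. Qed.

Lemma span_scal n (u v : V n) : (u <= v)%MS -> u = 0 \/ u = v.
Proof.
case/submxP => D ->.
have -> : D = (D 0 0)%:M by apply/rowP => i; rewrite !mxE (ord1 i) eqxx.
case: (F2_cases (D 0 0)) => ->; [left|right]; by rewrite ?mul_scalar_mx ?scale0r ?scale1r.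
Qed.

Lemma affineP n (A : {set V n}) r :
  is_affine A r <-> [/\ A != set0, aff3 A & #|A| = (2 ^ r)%N].
Proof.
split.
- case/existsP => a /existsP [M /andP [/eqP rk /eqP ->]].
  split.
  + apply/set0Pn; exists a; by rewrite inE subrr sub0mx.
  + move=> x y z; rewrite !inE => hx hy hz.
    have -> : x + y + z - a = (x - a) + (y - a) + (z - a).
      apply/rowP => i; rewrite !mxE; move: (x 0 i) (y 0 i) (z 0 i) (a 0 i).
      f2all; by apply/eqP.
    by apply: addmx_sub => //; apply: addmx_sub.
  + rewrite -rk -card_rowspace.
    have -> : [set v : V n | (v - a <= M)%MS] = [set (u + a) | u in [set u : V n | (u <= M)%MS]].
      apply/setP => v; rewrite inE; apply/idP/imsetP.
      * move=> h; exists (v - a); first by rewrite inE.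
        by rewrite subrK.
      * by move=> [u]; rewrite inE => hu ->; rewrite addrK.
    by rewrite card_imset //; exact: addIr.
- case=> /set0Pn [a ha] hA hc.
  pose S := [set u : V n | u + a \in A].
  have S0 : (0 : V n) \in S by rewrite inE add0r.
  have SD : forall u w, u \in S -> w \in S -> u + w \in S.
    move=> u w; rewrite !inE => hu hw.
    have := hA _ _ _ hu hw ha.
    suff -> : u + a + (w + a) + a = u + w + a by [].
    apply/rowP => i; rewrite !mxE; move: (u 0 i) (w 0 i) (a 0 i).
    f2all; by apply/eqP.
  pose M := (\sum_(v in S) <<v>>)%MS.
  have HM : forall u, (u <= M)%MS = (u \in S).
    move=> u; apply/idP/idP; last first.
      by move=> hu; apply: (sumsmx_sup u) => //; rewrite genmxE.
    rewrite /M; move: u; apply: (big_ind (fun N : 'M_n => forall u : V n, (u <= N)%MS -> u \in S)).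
    + by move=> u; move/submx0null ->.
    + move=> N1 N2 h1 h2 u /sub_addsmxP [[D1 D2] /= ->].
      apply: SD; [apply: h1|apply: h2]; exact: submxMl.
    + move=> v hv u; rewrite genmxE => /span_scal [->|->] //.
  apply/existsP; exists a; apply/existsP; exists M; apply/andP; split.
  + apply/eqP/eqP; rewrite -(eqn_exp2l _ _ (isT : (1 < 2)%N)) -card_rowspace -hc.
    have -> : A = [set (u + a) | u in [set u : V n | (u <= M)%MS]].
      apply/setP => v; apply/idP/imsetP.
      * move=> hv; exists (v + a); first by rewrite inE HM inE -V_sub_add addrK.
        by rewrite -V_sub_add addrK.
      * by move=> [u]; rewrite inE HM inE => hu ->.
    by rewrite card_imset //; exact: addIr.
  + apply/eqP/setP => v; rewrite inE HM inE V_sub_add.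
    by rewrite -[v + a + a]V_sub_add addrK.
Qed.

Lemma halfS_le n : (n.+1./2 <= (n./2).+1)%N.
Proof. have -> : n.+1./2 = uphalf n by []. by rewrite uphalf_half; case: (odd n). Qed.

Lemma lat0 e n : @in_lattice e n 0.
Proof. exists 0; rewrite big1 // => p _; by rewrite ffunE mulr0z. Qed.

Lemma latD e n (x y : Gam n) : @in_lattice e n x -> @in_lattice e n y -> @in_lattice e n (x + y).
Proof.
move=> [c ->] [d ->]; exists (c + d); rewrite -big_split; apply: eq_bigr => p _.
by rewrite ffunE mulrzDr.
Qed.

Lemma latN e n (x : Gam n) : @in_lattice e n x -> @in_lattice e n (- x).
Proof.
move=> [c ->]; exists (- c); rewrite -sumrN; apply: eq_bigr => p _.
by rewrite ffunE mulrNz.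
Qed.

Lemma gen_scale n (A : {set V n}) k j : gen A k *~ (2 ^ j)%N = gen A (k + j).
Proof.
apply/ffunP => v; rewrite ffunMzE !ffunE; case: (v \in A); last by rewrite mul0rz.
by rewrite mulrzz -PoszM expnD.
Qed.

Lemma lat_gen e n (A : {set V n}) r k :
  is_affine A r -> (r <= n)%N -> (e n r <= k)%N -> @in_lattice e n (gen A k).
Proof.
move=> hA hr hk.
have hr' : (r < n.+1)%N by [].
pose p0 : {set V n} * 'I_n.+1 := (A, inord r).
have p0r : (p0.2 : nat) = r by rewrite /= inordK.
exists [ffun p => if p == p0 then (2 ^ (k - e n r))%N%:Z else 0].
rewrite (bigD1 p0) /=; last by rewrite p0r.
rewrite big1 ?addr0.
  by rewrite ffunE eqxx p0r gen_scale subnKC.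
by move=> p /andP [_ /negbTE hp]; rewrite ffunE hp mulr0z.
Qed.

Lemma lat_ind e n (P : Gam n -> Prop) :
  P 0 -> (forall x y, P x -> P y -> P (x + y)) -> (forall x, P x -> P (- x)) ->
  (forall A r, is_affine A r -> (r <= n)%N -> P (gen A (e n r))) ->
  forall x, @in_lattice e n x -> P x.
Proof.
move=> P0 PD PN Pg x [c ->]; apply: big_ind => // p hp.
have hg := Pg _ _ hp (ltn_ord p.2 : (p.2 <= n)%N).
case: (c p) => j.
- elim: j => [|j IH]; first by rewrite mulr0z.
  by rewrite -[Posz j.+1]/(j.+1 : int) -pmulrn mulrS; apply: PD => //; rewrite pmulrn.
- apply: PN; elim: j => [|j IH]; first by rewrite mulr1n.
  by rewrite mulrS; apply: PD.
Qed.

Lemma push_inj m (f : V m -> V (m + 1)) (y : Gam m) v :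
  injective f -> push f y (f v) = y v.
Proof. by move=> fi; rewrite ffunE (big_pred1 v) // => u; rewrite /= inj_eq. Qed.

Lemma push_out m (f : V m -> V (m + 1)) (y : Gam m) w :
  (forall v, f v != w) -> push f y w = 0.
Proof. by move=> h; rewrite ffunE big_pred0 // => u; apply/negbTE. Qed.

Lemma pushD m f (x y : Gam m) : push f (x + y) = push f x + push f y.
Proof. apply/ffunP => w; rewrite !ffunE -big_split; apply: eq_bigr => v _; by rewrite ffunE. Qed.

Lemma pushN m f (x : Gam m) : push f (- x) = - push f x.
Proof. apply/ffunP => w; rewrite !ffunE -sumrN; apply: eq_bigr => v _; by rewrite ffunE. Qed.

Lemma push0 m f : push f (0 : Gam m) = 0.
Proof. by rewrite -(subrr (0 : Gam m)) pushD pushN subrr. Qed.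

Lemma gen0 n k : gen (set0 : {set V n}) k = 0.
Proof. by apply/ffunP => v; rewrite !ffunE inE. Qed.

Definition tV m (B : 'M['F_2]_(m + 1)) : V (m + 1) := row_mx 0 (const_mx 1) *m B.
Definition piV m (B : 'M['F_2]_(m + 1)) (w : V (m + 1)) : V m := lsubmx (w *m invmx B).

Lemma tau_iota m B (v : V m) : tauV B v = iotaV B v + tV B.
Proof. by rewrite /tauV /iotaV /tV -mulmxDl add_row_mx addr0 add0r. Qed.

Lemma iotaD m B (u v : V m) : iotaV B (u + v) = iotaV B u + iotaV B v.
Proof. by rewrite /iotaV -mulmxDl add_row_mx addr0. Qed.

Lemma piD m B (u v : V (m + 1)) : piV B (u + v) = piV B u + piV B v.
Proof. by rewrite /piV mulmxDl linearD. Qed.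

Lemma pi_iota m B (hB : B \in unitmx) (v : V m) : piV B (iotaV B v) = v.
Proof. by rewrite /piV /iotaV mulmxK // row_mxKl. Qed.

Lemma pi_tau m B (hB : B \in unitmx) (v : V m) : piV B (tauV B v) = v.
Proof. by rewrite /piV /tauV mulmxK // row_mxKl. Qed.

Lemma iota_inj m B (hB : B \in unitmx) : injective (@iotaV m B).
Proof. by move=> u v /(congr1 (piV B)); rewrite !pi_iota. Qed.

Lemma tau_inj m B (hB : B \in unitmx) : injective (@tauV m B).
Proof. by move=> u v /(congr1 (piV B)); rewrite !pi_tau. Qed.

Lemma iota_tau m B (hB : B \in unitmx) (u v : V m) : iotaV B u != tauV B v.
Proof.
apply/eqP => /(congr1 (fun w => rsubmx (w *m invmx B))).
rewrite /iotaV /tauV !mulmxK // !row_mxKr => /rowP /(_ 0); rewrite !mxE.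
by move/(congr1 val).
Qed.

Lemma cover m B (hB : B \in unitmx) (w : V (m + 1)) :
  w = iotaV B (piV B w) \/ w = tauV B (piV B w).
Proof.
set u := w *m invmx B.
have Hw : w = row_mx (lsubmx u) (rsubmx u) *m B by rewrite hsubmxK /u mulmxKV.
case: (F2_cases (rsubmx u 0 0)) => h; [left|right];
  rewrite {1}Hw /iotaV /tauV /piV -/u; congr (row_mx _ _ *m B);
  apply/rowP => i; by rewrite (ord1 i) h !mxE.
Qed.

Lemma iota_in_tau m B (hB : B \in unitmx) (U : {set V m}) v :
  (iotaV B v \in tauV B @: U) = false.
Proof. apply/imsetP => -[u _ h]; move: (iota_tau hB v u); by rewrite h eqxx. Qed.

Lemma tau_in_iota m B (hB : B \in unitmx) (U : {set V m}) v :
  (tauV B v \in iotaV B @: U) = false.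
Proof. apply/imsetP => -[u _ h]; move: (iota_tau hB u v); by rewrite h eqxx. Qed.

Lemma V3t n (a b c t : V n) : (a + t) + (b + t) + (c + t) = a + b + c + t.
Proof. apply/rowP => i; rewrite !mxE; move: (a 0 i) (b 0 i) (c 0 i) (t 0 i).
f2all; by apply/eqP. Qed.
Lemma V_tt n (p q s t : V n) : (p + t) + q + (s + t) = p + q + s.
Proof. apply/rowP => i; rewrite !mxE; move: (p 0 i) (q 0 i) (s 0 i) (t 0 i).
f2all; by apply/eqP. Qed.
Lemma V_c1 n (p q t : V n) : p + q + (q + t) = p + t.
Proof. apply/rowP => i; rewrite !mxE; move: (p 0 i) (q 0 i) (t 0 i).
f2all; by apply/eqP. Qed.
Lemma V_c2 n (p q t : V n) : (p + t) + (q + t) + q = p.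
Proof. apply/rowP => i; rewrite !mxE; move: (p 0 i) (q 0 i) (t 0 i).
f2all; by apply/eqP. Qed.

Lemma card_V n : #|{: V n}| = (2 ^ n)%N.
Proof. by rewrite card_mx card_Fp // mul1n. Qed.

Lemma aff_le n (A : {set V n}) r : is_affine A r -> (r <= n)%N.
Proof.
case/affineP => _ _ hc; rewrite -(@leq_exp2l 2) // -hc -card_V; exact: max_card.
Qed.

Lemma aff_iota m B (hB : B \in unitmx) (U : {set V m}) r :
  is_affine U r -> is_affine (iotaV B @: U) r.
Proof.
case/affineP => /set0Pn [a ha] hU hc; apply/affineP; split.
- by apply/set0Pn; exists (iotaV B a); apply: imset_f.
- move=> x y z /imsetP [u hu ->] /imsetP [v hv ->] /imsetP [w hw ->].
  by rewrite -!iotaD; apply: imset_f; apply: hU.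
- by rewrite card_imset //; exact: iota_inj.
Qed.

Lemma mem_both m B (hB : B \in unitmx) (U : {set V m}) w :
  (w \in iotaV B @: U :|: tauV B @: U) = (piV B w \in U).
Proof.
apply/idP/idP.
- by case/setUP => /imsetP [u hu ->]; rewrite ?(pi_iota hB) ?(pi_tau hB).
- move=> h; apply/setUP; case: (cover hB w) => ->; [left|right]; exact: imset_f.
Qed.

Lemma aff_both m B (hB : B \in unitmx) (U : {set V m}) r :
  is_affine U r -> is_affine (iotaV B @: U :|: tauV B @: U) r.+1.
Proof.
case/affineP => /set0Pn [a ha] hU hc; apply/affineP; split.
- by apply/set0Pn; exists (iotaV B a); apply/setUP; left; apply: imset_f.
- move=> x y z; rewrite !(mem_both hB) !piD => hx hy hz; exact: hU.
- rewrite cardsU !card_imset; try exact: iota_inj; try exact: tau_inj.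
  have -> : iotaV B @: U :&: tauV B @: U = set0.
    apply/setP => w; rewrite inE in_set0; apply/negbTE; apply/andP => -[/imsetP [u _ ->]].
    by rewrite (iota_in_tau hB).
  by rewrite cards0 subn0 hc expnS mul2n addnn.
Qed.

Lemma sup_L m B (hB : B \in unitmx) (l : Gam m) :
  Lambda l -> Lambda (push (iotaV B) l + push (tauV B) l).
Proof.
move: l; apply: (lat_ind (P := fun l => Lambda (push (iotaV B) l + push (tauV B) l))).
- by rewrite !push0 addr0; apply: lat0.
- move=> x y hx hy; rewrite !pushD addrACA; exact: latD.
- move=> x hx; rewrite !pushN -opprD; exact: latN.
- move=> U r hU hr; set k := (m - r)./2.
  have -> : push (iotaV B) (gen U k) + push (tauV B) (gen U k) =
            gen (iotaV B @: U :|: tauV B @: U) k.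
    apply/ffunP => w; rewrite ffunE [in RHS]ffunE (mem_both hB).
    case: (cover hB w) => ->.
    + rewrite push_inj; last exact: iota_inj.
      rewrite push_out ?addr0; last by move=> u; rewrite eq_sym (iota_tau hB).
      by rewrite ffunE (pi_iota hB).
    + rewrite push_inj; last exact: tau_inj.
      rewrite push_out ?add0r; last by move=> u; rewrite (iota_tau hB).
      by rewrite ffunE (pi_tau hB).
  apply: lat_gen (aff_both hB hU) _ _; first by rewrite addn1.
  by rewrite addn1 subSS.
Qed.

Lemma sup_D m B (hB : B \in unitmx) (d : Gam m) :
  Delta d -> Lambda (push (iotaV B) d).
Proof.
move: d; apply: (lat_ind (P := fun d => Lambda (push (iotaV B) d))).
- by rewrite !push0; apply: lat0.
- move=> x y hx hy; rewrite !pushD; exact: latD.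
- move=> x hx; rewrite !pushN; exact: latN.
- move=> U r hU hr; set k := (m - r).+1./2.
  have -> : push (iotaV B) (gen U k) = gen (iotaV B @: U) k.
    apply/ffunP => w; rewrite [in RHS]ffunE.
    case: (cover hB w) => ->.
    + rewrite push_inj; last exact: iota_inj.
      by rewrite ffunE mem_imset //; exact: iota_inj.
    + rewrite push_out; last by move=> u; rewrite (iota_tau hB).
      by rewrite (tau_in_iota hB).
  apply: lat_gen (aff_iota hB hU) _ _; first by rewrite addn1 (leq_trans hr).
  by rewrite addn1 subSn.
Qed.

Lemma sub_gen m B (hB : B \in unitmx) (W : {set V (m + 1)}) r :
  is_affine W r -> (r <= m + 1)%N ->
  exists l d, [/\ Lambda l, Delta d &
    gen W ((m + 1 - r)./2) = push (iotaV B) l + push (iotaV B) d + push (tauV B) l].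
Proof.
move=> hW hr; set k := ((m + 1) - r)./2.
pose U1 := [set v | iotaV B v \in W]; pose U2 := [set v | tauV B v \in W].
have HW : gen W k = push (iotaV B) (gen U1 k) + push (tauV B) (gen U2 k).
  apply/ffunP => w; rewrite ffunE [in RHS]ffunE.
  case: (cover hB w) => ->.
  + rewrite push_inj; last exact: iota_inj.
    rewrite push_out ?addr0; last by move=> u; rewrite eq_sym (iota_tau hB).
    by rewrite ffunE inE.
  + rewrite push_inj; last exact: tau_inj.
    rewrite push_out ?add0r; last by move=> u; rewrite (iota_tau hB).
    by rewrite ffunE inE.
case/affineP: (hW) => hne hA hc.
have aff1 : aff3 U1.
  move=> x y z; rewrite !inE => hx hy hz; rewrite !iotaD; exact: hA.
have aff2 : aff3 U2.
  move=> x y z; rewrite !inE => hx hy hz.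
  have := hA _ _ _ hx hy hz; by rewrite !tau_iota V3t !iotaD.
have card : #|W| = (#|U1| + #|U2|)%N.
  have -> : W = iotaV B @: U1 :|: tauV B @: U2.
    apply/setP => w; apply/idP/idP.
    - move=> hw; apply/setUP; case: (cover hB w) => e; [left|right];
        rewrite e; apply: imset_f; rewrite inE -e //.
    - by case/setUP => /imsetP [u]; rewrite inE => hu ->.
  rewrite cardsU !card_imset; try exact: iota_inj; try exact: tau_inj.
  have -> : iotaV B @: U1 :&: tauV B @: U2 = set0.
    apply/setP => w; rewrite inE in_set0; apply/negbTE; apply/andP => -[/imsetP [u _ ->]].
    by rewrite (iota_in_tau hB).
  by rewrite cards0 subn0.
have ne_card : forall (U : {set V m}) j, #|U| = (2 ^ j)%N -> U != set0.
  by move=> U j hU; rewrite -cards_eq0 hU expn_eq0.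
case: (boolP (U2 == set0)) => [/eqP e2 | ne2].
  have c1 : #|U1| = (2 ^ r)%N by rewrite -hc card e2 cards0 addn0.
  have hU1 : is_affine U1 r by apply/affineP; split => //; exact: ne_card c1.
  have hrm := aff_le hU1.
  exists 0, (gen U1 k); split; first exact: lat0.
    by apply: (lat_gen hU1 hrm); rewrite /k addn1 subSn.
  by rewrite HW e2 gen0 !push0 addr0 add0r addr0.
case: (boolP (U1 == set0)) => [/eqP e1 | ne1].
  have c2 : #|U2| = (2 ^ r)%N by rewrite -hc card e1 cards0 add0n.
  have hU2 : is_affine U2 r by apply/affineP; split => //; exact: ne_card c2.
  have hrm := aff_le hU2.
  exists (gen U2 k), (- gen U2 k); split.
  - by apply: (lat_gen hU2 hrm); rewrite /k half_leq // leq_sub2r // addn1.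
  - by apply: latN; apply: (lat_gen hU2 hrm); rewrite /k addn1 subSn.
  - by rewrite HW e1 gen0 !push0 add0r pushN subrr add0r.
case/set0Pn: ne1 => a ha; case/set0Pn: ne2 => b hb.
have le12 : (#|U1| <= #|U2|)%N.
  rewrite -(card_imset U1 (addIr (a + b))); apply: subset_leq_card.
  apply/subsetP => w /imsetP [v]; rewrite !inE => hv ->.
  move: ha hb; rewrite !inE => ha hb.
  have := hA _ _ _ hv ha hb; by rewrite !tau_iota !iotaD !addrA.
have le21 : (#|U2| <= #|U1|)%N.
  rewrite -(card_imset U2 (addIr (a + b))); apply: subset_leq_card.
  apply/subsetP => w /imsetP [v]; rewrite !inE => hv ->.
  move: ha hb; rewrite !inE => ha hb.
  have := hA _ _ _ hv ha hb; by rewrite !tau_iota V_tt !iotaD !addrA.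
have e12 : #|U1| = #|U2| by apply/eqP; rewrite eqn_leq le12 le21.
case: r hr @k hW hc HW {hne} => [|r'] hr k hW hc HW.
  by exfalso; move: hc; rewrite card -e12 expn0; lia.
have c1 : #|U1| = (2 ^ r')%N by move: hc; rewrite card -e12 expnS; lia.
have c2 : #|U2| = (2 ^ r')%N by rewrite -e12.
have hU1 : is_affine U1 r' by apply/affineP; split => //; exact: ne_card c1.
have hU2 : is_affine U2 r' by apply/affineP; split => //; exact: ne_card c2.
have hrm := aff_le hU1.
have hk : k = (m - r')./2 by rewrite /k addn1 subSS.
case: (boolP (U1 :&: U2 == set0)) => [/eqP dis | /set0Pn [c]]; last first.
  rewrite !inE => /andP [hc1 hc2].
  have e : U1 = U2.
    apply/setP => u; rewrite !inE; apply/idP/idP => h.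
    - have := hA _ _ _ h hc1 hc2; by rewrite tau_iota V_c1 -tau_iota.
    - have := hA _ _ _ h hc2 hc1; by rewrite !tau_iota V_c2.
  exists (gen U2 k), 0; split.
  - by apply: (lat_gen hU2 hrm); rewrite hk.
  - exact: lat0.
  - rewrite HW push0 addr0 e; reflexivity.
pose Y := U1 :|: U2.
have cY : #|Y| = (2 ^ r'.+1)%N by rewrite cardsU dis cards0 subn0 c1 c2 expnS; lia.
have eY : Y = [set piV B w | w in W].
  apply/setP => v; apply/idP/imsetP.
  - case/setUP; rewrite inE => hv; [exists (iotaV B v) | exists (tauV B v)];
      rewrite ?(pi_iota hB) ?(pi_tau hB) //.
  - move=> [w hw ->]; apply/setUP; case: (cover hB w) => e; [left|right];
      rewrite inE -e //.
have aY : aff3 Y.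
  move=> x y z; rewrite eY => /imsetP [w1 h1 ->] /imsetP [w2 h2 ->] /imsetP [w3 h3 ->].
  rewrite -!piD; apply: imset_f; exact: hA.
have hY : is_affine Y r'.+1 by apply/affineP; split => //; exact: ne_card cY.
have hYm := aff_le hY.
exists (gen U2 k), (gen Y k - gen U2 k.+1); split.
- by apply: (lat_gen hU2 hrm); rewrite hk.
- apply: latD; first by apply: (lat_gen hY hYm); rewrite hk subnSK.
  apply: latN; apply: (lat_gen hU2 hrm); rewrite hk; exact: halfS_le.
- have -> : gen Y k - gen U2 k.+1 = gen U1 k - gen U2 k.
    apply/ffunP => v; rewrite !ffunE /Y in_setU.
    case h1: (v \in U1); case h2: (v \in U2) => /=.
    + by move/setP: dis => /(_ v); rewrite inE h1 h2 in_set0.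
    + by rewrite !subr0.
    + by rewrite expnS mul2n -addnn PoszD opprD addrA subrr.
    + by [].
  by rewrite HW pushD pushN [push (iotaV B) (gen U2 k) + _]addrC subrK.
Qed.

Lemma addr3ACA (Z : zmodType) (a b c a' b' c' : Z) :
  (a + b + c) + (a' + b' + c') = (a + a') + (b + b') + (c + c').
Proof. by rewrite addrACA [a + b + _]addrACA. Qed.

Theorem theorem3p2 (m : nat) (hm : (1 <= m)%N)
  (B : 'M['F_2]_(m + 1)) (hB : B \in unitmx) (x : Gam (m + 1)) :
  Lambda x <->
  exists (l d : Gam m), [/\ Lambda l, Delta d &
    x = push (iotaV B) l + push (iotaV B) d + push (tauV B) l].
Proof.
split.
- move: x; apply: (lat_ind (P := fun x => exists (l d : Gam m), [/\ Lambda l, Delta d &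
    x = push (iotaV B) l + push (iotaV B) d + push (tauV B) l])).
  + exists 0, 0; split; try exact: lat0; by rewrite !push0 !addr0.
  + move=> x y [l1 [d1 [h1 h2 ->]]] [l2 [d2 [h3 h4 ->]]].
    exists (l1 + l2), (d1 + d2); split; try exact: latD.
    by rewrite !pushD addr3ACA.
  + move=> x [l [d [h1 h2 ->]]]; exists (- l), (- d); split; try exact: latN.
    by rewrite !pushN !opprD.
  + move=> W r hW hr /=; exact: (sub_gen hB hW hr).
- move=> [l [d [hl hd ->]]].
  rewrite addrAC; apply: latD; [exact: sup_L | exact: sup_D].
Qed.
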